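(* For every integer $n \ge 0$, define $\psi : \mathrm{SYT}(\theta^{(n)}) \to \mathcal{P}_n$ as follows. For $T \in \mathrm{SYT}(\theta^{(n)})$, let $\psi(T) = p_1 p_2 \cdots p_{2n+2}$, where for each $1 \le i \le 2n+2$: \[ p_i = \begin{cases} \mathsf{E}, & \text{if } i+2 \in \mathrm{arm}(T);\\ \mathsf{N}, & \text{if } i+2 \in \mathrm{leg}(T);\\ \mathsf{S}, & \text{if } i+2 \in \mathrm{heart}(T) \text{ and } 2 \in \mathrm{arm}(T);\\ \mathsf{W}, & \text{if } i+2 \in \mathrm{heart}(T) \text{ and } 2 \in \mathrm{leg}(T). \end{cases} \] Then $\psi(T)$ lies in $\mathcal{P}_n$ for every $T$, and $\psi$ is a bijection. In particular, $|\mathcal{P}_n| = |\mathrm{SYT}(\theta^{(n)})|$.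
   Context: For $n \ge 0$, $\theta^{(n)}$ denotes the integer partition $(n+2, 2, 1^n)$ of $2n+4$ (rows of lengths $n+2$, $2$, and then $n$ rows of length $1$), identified with its Young diagram in English convention (the row of length $n+2$ on top). The \emph{arm} of $\theta^{(n)}$ is its first row (all $n+2$ boxes, including the top-left corner box), the \emph{leg} is its first column (all $n+2$ boxes, including the top-left corner box), and the \emph{heart} is the unique box lying in neither the first row nor the first column (the second box of the second row). $\mathrm{SYT}(\theta^{(n)})$ is the set of standard Young tableaux of shape $\theta^{(n)}$: bijective fillings of the boxes with $1, \dots, 2n+4$ increasing left to right along rows and top to bottom down columns. For a tableau $T$, $\mathrm{arm}(T)$, $\mathrm{leg}(T)$, $\mathrm{heart}(T)$ denote the sets of entries of $T$ in the arm, leg, and heart respectively; ''$k \in \mathrm{arm}(T)$'' means the entry $k$ lies in the arm. $\mathcal{P}_n$ is the set of lattice paths in $\mathbb{Z}^2$ from $(0,0)$ to $(n,n)$ of exactly $2n+2$ steps, each step one of $\mathsf{N} = (0,1)$, $\mathsf{S} = (0,-1)$, $\mathsf{E} = (1,0)$, $\mathsf{W} = (-1,0)$, such that every vertex of the path lies in the closed first quadrant $\{(x,y) : x \ge 0, y \ge 0\}$. Such a path is identified with its word $p_1 p_2 \cdots p_{2n+2}$ of steps in the alphabet $\{\mathsf{N},\mathsf{S},\mathsf{E},\mathsf{W}\}$. *)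

(* Defs.v *)
From HB Require Import structures.
From mathcomp Require Import all_boot all_order all_algebra.
Unset Strict Implicit. Unset Printing Implicit Defensive.
Import GRing.Theory Num.Theory.

(* Boxes are (row, column), 0-based, English convention; rows 0..n+1,
   columns 0..n+1. *)
Definition in_theta {n : nat} (b : 'I_(n+2) * 'I_(n+2)) : bool :=
  (val b.1 == 0) || (val b.2 == 0) || ((val b.1 == 1) && (val b.2 == 1)).

Definition box (n : nat) := {b : 'I_(n+2) * 'I_(n+2) | in_theta b}.

Definition brow {n} (b : box n) : nat := val (val b).1.
Definition bcol {n} (b : box n) : nat := val (val b).2.

Definition in_arm {n} (b : box n) : bool := brow b == 0.
Definition in_leg {n} (b : box n) : bool := bcol b == 0.
Definition in_heart {n} (b : box n) : bool := (brow b == 1) && (bcol b == 1).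

Definition filling n := {ffun box n -> 'I_(2*n+5)}.

Definition is_SYT {n} (T : filling n) : bool :=
  [&& injectiveb T,
      [forall k : 'I_(2*n+5), (0 < val k) ==> [exists b, T b == k]],
      [forall b, 0 < val (T b)],
      [forall b1, forall b2,
         ((brow b1 == brow b2) && (bcol b1 < bcol b2)) ==> (val (T b1) < val (T b2))] &
      [forall b1, forall b2,
         ((bcol b1 == bcol b2) && (brow b1 < brow b2)) ==> (val (T b1) < val (T b2))]].

Definition SYT n : {set filling n} := [set T | is_SYT T].

Definition entry_in_arm {n} (T : filling n) (k : nat) : bool :=
  [exists b, (val (T b) == k) && in_arm b].
Definition entry_in_leg {n} (T : filling n) (k : nat) : bool :=
  [exists b, (val (T b) == k) && in_leg b].
Definition entry_in_heart {n} (T : filling n) (k : nat) : bool :=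
  [exists b, (val (T b) == k) && in_heart b].

Inductive step := N | S | E | W.

Definition step_to_ord (s : step) : 'I_4 :=
  match s with N => inord 0 | S => inord 1 | E => inord 2 | W => inord 3 end.
Definition ord_to_step (i : 'I_4) : step :=
  match val i with 0 => N | 1 => S | 2 => E | _ => W end.
Lemma step_to_ordK : cancel step_to_ord ord_to_step.
Proof. by case; rewrite /ord_to_step /= inordK. Qed.

HB.instance Definition _ := Equality.copy step (can_type step_to_ordK).
HB.instance Definition _ := Choice.copy step (can_type step_to_ordK).
HB.instance Definition _ := Countable.copy step (can_type step_to_ordK).
HB.instance Definition _ := Finite.copy step (can_type step_to_ordK).

Definition step_vec (s : step) : int * int :=
  match s with
  | N => (0%R, 1%R) | S => (0%R, (-1)%R) | E => (1%R, 0%R) | W => ((-1)%R, 0%R)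
  end.

Definition endpoint (w : seq step) : int * int :=
  foldl (fun p s => (p.1 + (step_vec s).1, p.2 + (step_vec s).2)%R) (0%R, 0%R) w.

Definition in_quadrant (p : int * int) : bool := ((0 <= p.1) && (0 <= p.2))%R.

Definition is_path_n {n} (w : (2*n+2).-tuple step) : bool :=
  all (fun k => in_quadrant (endpoint (take k w))) (iota 0 (2*n+3)) &&
  (endpoint w == ((n%:Z)%R, (n%:Z)%R)).

Definition Paths n : {set (2*n+2).-tuple step} := [set w | is_path_n w].

Definition psi_step {n} (T : filling n) (i : nat) : step :=
  if entry_in_arm T (i+2) then E
  else if entry_in_leg T (i+2) then N
  else if entry_in_heart T (i+2) && entry_in_arm T 2 then S
  else W.

(* p_i for i = 1..2n+2 *)
Definition psi {n} (T : filling n) : (2*n+2).-tuple step :=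
  [tuple psi_step T (val i).+1 | i < 2*n+2].

(* Main.v *)
Require Import Defs.
From HB Require Import structures.
From mathcomp Require Import all_boot all_order all_algebra.
From mathcomp Require Import zify.
Set Implicit Arguments. Unset Strict Implicit. Unset Printing Implicit Defensive.


Definition o0 {n} : 'I_(n+2) := Ordinal (n:=n+2) (m:=0) (ltn_addl n (isT : 0 < 2)).
Definition ordn {n} (k : nat) : 'I_(n+2) := insubd o0 k.
Lemma val_ordn n k : k < n+2 -> val (@ordn n k) = k.
Proof. by move=> h; rewrite val_insubd h. Qed.

Lemma arm_in n k : @in_theta n (o0, ordn k).
Proof. by []. Qed.
Lemma leg_in n k : @in_theta n (ordn k, o0).
Proof. by rewrite /in_theta /= orbT. Qed.
Lemma heart_in n : @in_theta n (ordn 1, ordn 1).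
Proof. by rewrite /in_theta /= !val_ordn ?eqxx ?orbT //; lia. Qed.

Definition armb {n} (k : nat) : box n := @exist _ (fun b => @in_theta n b) _ (arm_in n k).
Definition legb {n} (k : nat) : box n := @exist _ (fun b => @in_theta n b) _ (leg_in n k).
Definition heartb {n} : box n := @exist _ (fun b => @in_theta n b) _ (heart_in n).

Lemma brow_arm n k : brow (@armb n k) = 0. Proof. by []. Qed.
Lemma bcol_arm n k : k < n+2 -> bcol (@armb n k) = k. Proof. exact: val_ordn. Qed.
Lemma bcol_leg n k : bcol (@legb n k) = 0. Proof. by []. Qed.
Lemma brow_leg n k : k < n+2 -> brow (@legb n k) = k. Proof. exact: val_ordn. Qed.
Lemma brow_heart n : brow (@heartb n) = 1. Proof. by rewrite /brow val_ordn //; lia. Qed.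
Lemma bcol_heart n : bcol (@heartb n) = 1. Proof. by rewrite /bcol val_ordn //; lia. Qed.

Lemma box_eq n (b1 b2 : box n) : brow b1 = brow b2 -> bcol b1 = bcol b2 -> b1 = b2.
Proof.
move=> hr hc; apply: val_inj; case: b1 b2 hr hc => [[r1 c1] h1] [[r2 c2] h2] /= hr hc.
by rewrite /brow /bcol /= in hr hc; congr pair; apply: val_inj.
Qed.

Lemma legb0 n : @legb n 0 = armb 0.
Proof. by apply: box_eq; rewrite ?brow_leg ?bcol_arm //; lia. Qed.

Lemma brow_lt n (b : box n) : brow b < n+2. Proof. exact: ltn_ord. Qed.
Lemma bcol_lt n (b : box n) : bcol b < n+2. Proof. exact: ltn_ord. Qed.

Variant box_spec n : box n -> Type :=
| BArm c : c < n+2 -> box_spec (armb c)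
| BLeg r : 0 < r < n+2 -> box_spec (legb r)
| BHeart : box_spec heartb.

Lemma boxP n (b : box n) : box_spec b.
Proof.
have hr := brow_lt b; have hc := bcol_lt b.
case: b hr hc => -[r c] h /=.
rewrite /brow /bcol /= /in_theta /= in h * => hr hc.
have [r0|rn0] := eqVneq (val r) 0.
  have -> : exist _ (r, c) h = armb (n:=n) (val c).
    by apply: box_eq; rewrite ?brow_arm ?bcol_arm // /brow /bcol /= r0.
  by constructor.
have [c0|cn0] := eqVneq (val c) 0.
  have -> : exist _ (r, c) h = legb (n:=n) (val r).
    by apply: box_eq; rewrite ?bcol_leg ?brow_leg // /brow /bcol /= c0.
  by constructor; rewrite hr andbT lt0n.
have h' := h; move: h'; rewrite (negbTE rn0) (negbTE cn0) /= => /andP[/eqP r1 /eqP c1].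
have -> : exist _ (r, c) h = heartb (n:=n).
  by apply: box_eq; rewrite ?brow_heart ?bcol_heart /brow /bcol /= ?r1 ?c1.
by constructor.
Qed.


Definition aT {n} (T : filling n) c := val (T (armb c)).
Definition lT {n} (T : filling n) r := val (T (legb r)).
Definition hT {n} (T : filling n) := val (T heartb).

Ltac bsimpl := rewrite ?brow_arm ?bcol_arm ?brow_leg ?bcol_leg ?brow_heart ?bcol_heart //.

Lemma SYT_rc n (T : filling n) :
  ([forall b1, forall b2,
         ((brow b1 == brow b2) && (bcol b1 < bcol b2)) ==> (val (T b1) < val (T b2))] &&
   [forall b1, forall b2,
         ((bcol b1 == bcol b2) && (brow b1 < brow b2)) ==> (val (T b1) < val (T b2))])
  <-> [/\ (forall c c', c < c' < n+2 -> aT T c < aT T c'),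
          (forall r r', r < r' < n+2 -> lT T r < lT T r'),
          aT T 1 < hT T & lT T 1 < hT T].
Proof.
have l0 : lT T 0 = aT T 0 by rewrite /lT legb0.
split.
  case/andP => /forallP R /forallP C; split.
  - move=> c c' /andP[h1 h2]; have h3 : c < n+2 by lia.
    have := forallP (R (armb c)) (armb c'); bsimpl; rewrite ?eqxx h1 //=.
  - move=> c c' /andP[h1 h2]; have h3 : c < n+2 by lia.
    have := forallP (C (legb c)) (legb c'); bsimpl; rewrite ?eqxx h1 //=.
  - have h3 : 1 < n+2 by lia.
    have := forallP (C (armb 1)) heartb; bsimpl.
  - have h3 : 1 < n+2 by lia.
    have := forallP (R (legb 1)) heartb; bsimpl.
case=> P1 P2 P3 P4; apply/andP; split; apply/forallP => b1; apply/forallP => b2;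
  apply/implyP => /andP[/eqP e lt];
  case: (boxP b1) e lt => [c hc|r hr|]; case: (boxP b2) => [c' hc'|r' hr'|];
  bsimpl; try lia; move=> e lt.
all: rewrite -?/(aT T _) -?/(lT T _) -?/(hT T).
all: try (apply: P1; lia); try (apply: P2; lia); try lia.
- by subst r.
- have -> : c = 0 by lia. rewrite -l0; apply: P2; lia.
- by have -> : c = 1 by lia.
Qed.


Ltac bs := repeat first [ rewrite brow_arm | rewrite bcol_leg | rewrite brow_heart | rewrite bcol_heart
  | (rewrite bcol_arm; last by lia) | (rewrite brow_leg; last by lia) ].

Definition armseq {n} (T : filling n) := [seq aT T c | c <- iota 0 (n+2)].
Definition legseq {n} (T : filling n) := [seq lT T c | c <- iota 0 (n+2)].

Lemma arm_entry n (T : filling n) k : entry_in_arm T k = (k \in armseq T).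
Proof.
apply/existsP/mapP => [[b /andP[/eqP e]]|[c]].
  case: (boxP b) e => [c hc|r hr|] e; rewrite /in_arm; bs.
  - by move=> _; exists c; first by rewrite mem_iota; lia.
  - by move/eqP; lia.
  - by [].
rewrite mem_iota => hc ->; exists (armb c); rewrite /in_arm brow_arm eqxx andbT //.
Qed.

Lemma leg_entry n (T : filling n) k : entry_in_leg T k = (k \in legseq T).
Proof.
apply/existsP/mapP => [[b /andP[/eqP e]]|[c]].
  case: (boxP b) e => [c hc|r hr|] e; rewrite /in_leg; bs.
  - move=> /eqP c0; subst c; exists 0; first by rewrite mem_iota; lia.
    by rewrite -e /lT legb0.
  - by move=> _; exists r; first by rewrite mem_iota; lia.
  - by [].
rewrite mem_iota => hc ->; exists (legb c); rewrite /in_leg bcol_leg eqxx andbT //.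
Qed.

Lemma heart_entry n (T : filling n) k : entry_in_heart T k = (hT T == k).
Proof.
apply/existsP/idP => [[b /andP[/eqP e]]|/eqP e].
  case: (boxP b) e => [c hc|r hr|] e; rewrite /in_heart; bs.
  - by [].
  - by rewrite andbF.
  - by move=> _; apply/eqP.
by exists heartb; rewrite /in_heart brow_heart bcol_heart -e /hT !eqxx.
Qed.

Section SYTfacts.
Variable n : nat.
Variable T : filling n.
Hypothesis HT : T \in SYT n.

Lemma T_inj : injective T.
Proof. by move: HT; rewrite inE => /and5P[/injectiveP]. Qed.
Lemma T_surj k : 0 < k < 2*n+5 -> exists b, val (T b) = k.
Proof.
move: HT; rewrite inE => /and5P[_ /forallP H _ _ _] /andP[k0 k5].
have := H (Ordinal k5); rewrite /= k0 /= => /existsP[b /eqP e].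
by exists b; rewrite e.
Qed.
Lemma T_pos b : 0 < val (T b).
Proof. by move: HT; rewrite inE => /and5P[_ _ /forallP H _ _]; apply: H. Qed.
Lemma T_bnd b : val (T b) < 2*n+5.
Proof. exact: ltn_ord. Qed.
Lemma T_mono : [/\ (forall c c', c < c' < n+2 -> aT T c < aT T c'),
          (forall r r', r < r' < n+2 -> lT T r < lT T r'),
          aT T 1 < hT T & lT T 1 < hT T].
Proof. by apply/SYT_rc; move: HT; rewrite inE => /and5P[_ _ _ R C]; rewrite R C. Qed.

Lemma T_valinj b1 b2 : val (T b1) = val (T b2) -> b1 = b2.
Proof. by move=> /val_inj /T_inj. Qed.

Lemma T_a0 : aT T 0 = 1.
Proof.
have [b hb] := T_surj (k:=1) ltac:(lia).
case: T_mono => P1 P2 P3 P4.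
have l0 : lT T 0 = aT T 0 by rewrite /lT legb0.
have pa := T_pos (armb 0).
case: (boxP b) hb => [c hc|r hr|] hb.
- case: c hc hb => [|c] hc hb; first by [].
  have := P1 0 c.+1 ltac:(lia); rewrite /aT in pa *; lia.
- have := P2 0 r ltac:(lia); rewrite l0 /lT /aT in pa *; lia.
- have := P1 0 1 ltac:(lia); rewrite /hT /aT in pa P3 *; lia.
Qed.

Lemma T_h3 : 3 <= hT T.
Proof. case: T_mono => P1 P2 P3 P4; have := P1 0 1 ltac:(lia); rewrite T_a0; lia. Qed.

Lemma T_hbnd : hT T <= 2*n+4.
Proof. have := T_bnd heartb; rewrite /hT; lia. Qed.

Lemma T_cover k : 0 < k < 2*n+5 -> [\/ k \in armseq T, k \in legseq T | hT T = k].
Proof.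
move=> /T_surj [b hb].
case: (boxP b) hb => [c hc|r hr|] hb.
- by apply: Or31; apply/mapP; exists c; rewrite ?mem_iota.
- by apply: Or32; apply/mapP; exists r; rewrite ?mem_iota //; lia.
- by apply: Or33.
Qed.

Lemma T_excl k : k \in armseq T -> k \in legseq T -> k = 1.
Proof.
move=> /mapP[c]; rewrite mem_iota => hc -> /mapP[r]; rewrite mem_iota => hr.
move=> /T_valinj e.
have : brow (armb (n:=n) c) = brow (legb (n:=n) r) by rewrite e.
rewrite brow_arm brow_leg; last lia.
move=> r0; subst r; move: e; rewrite legb0 => e.
have : bcol (armb (n:=n) c) = bcol (armb (n:=n) 0) by rewrite e.
rewrite !bcol_arm; try lia. move=> ->; exact: T_a0.
Qed.

Lemma T_hA : hT T \notin armseq T.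
Proof.
apply/negP => /mapP[c]; rewrite mem_iota => hc /T_valinj e.
by have := congr1 brow e; rewrite brow_heart brow_arm.
Qed.

Lemma T_hL : hT T \notin legseq T.
Proof.
apply/negP => /mapP[c]; rewrite mem_iota => hc /T_valinj e.
by have := congr1 bcol e; rewrite bcol_heart bcol_leg.
Qed.

Lemma T_armsorted : sorted ltn (armseq T).
Proof.
case: T_mono => P1 _ _ _.
apply: (homo_sorted_in (P := fun c => c < n+2)); last exact: iota_ltn_sorted.
  by move=> x y /= hx hy hxy; apply: P1; lia.
by apply/allP => x; rewrite mem_iota; lia.
Qed.

Lemma T_legsorted : sorted ltn (legseq T).
Proof.
case: T_mono => _ P2 _ _.
apply: (homo_sorted_in (P := fun c => c < n+2)); last exact: iota_ltn_sorted.
  by move=> x y /= hx hy hxy; apply: P2; lia.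
by apply/allP => x; rewrite mem_iota; lia.
Qed.

End SYTfacts.

Import GRing.Theory Num.Theory.

Lemma stepE (x y : step) : (x == y) =
  match x, y with N, N | S, S | E, E | W, W => true | _, _ => false end.
Proof. by case: x; case: y; rewrite ?eqxx //; apply/eqP. Qed.

Lemma endpointE (s : seq step) : endpoint s =
  (((count_mem E s)%:Z - (count_mem W s)%:Z)%R, ((count_mem N s)%:Z - (count_mem S s)%:Z)%R).
Proof.
rewrite /endpoint.
suff H : forall p, foldl (fun p s => (p.1 + (step_vec s).1, p.2 + (step_vec s).2)%R) p s =
  ((p.1 + ((count_mem E s)%:Z - (count_mem W s)%:Z))%R, (p.2 + ((count_mem N s)%:Z - (count_mem S s)%:Z))%R).
  by rewrite H /= !add0r.
elim: s => [|x s IH] p /=; first by rewrite !subrr !addr0; case: p.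
rewrite IH /=; case: x => /=; congr pair; rewrite !stepE ?add0n ?addn0 ?PoszD /=; lia.
Qed.

Lemma quadE (s : seq step) : in_quadrant (endpoint s) =
  (count_mem W s <= count_mem E s) && (count_mem S s <= count_mem N s).
Proof. by rewrite endpointE /in_quadrant /= !subr_ge0 !lez_nat. Qed.

Lemma count4 (s : seq step) :
  count_mem N s + count_mem S s + count_mem E s + count_mem W s = size s.
Proof. elim: s => [|x s IH] //=; case: x => /=; rewrite !stepE; rewrite ?add0n ?add1n -?[true + _]add1n; by rewrite -IH ?addSn ?addnS. Qed.

Lemma QL (X Y : step) (s : seq step) : count_mem X s <= 1 ->
  (forall j, j < size s -> nth N s j = X -> exists2 i, i < j & nth N s i = Y) ->
  forall k, count_mem X (take k s) <= count_mem Y (take k s).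
Proof.
move=> c1 H k.
have cX : count_mem X (take k s) <= 1.
  by apply: leq_trans c1; rewrite -{2}(cat_take_drop k s) count_cat leq_addr.
case: (posnP (count_mem X (take k s))) => [-> //|].
rewrite -has_count => /(has_nthP N)[j hj /eqP e].
rewrite size_take_min in hj.
have hjs : j < size s by lia.
have hjk : j < k by lia.
rewrite nth_take // in e.
have [i hi ei] := H j hjs e.
suff : 0 < count_mem Y (take k s) by lia.
rewrite -has_count; apply/(has_nthP N); exists i.
  by rewrite size_take_min; lia.
by rewrite /= nth_take ?ei; [|lia].
Qed.

Lemma QR (X Y : step) (s : seq step) : X != Y ->
  (forall k, count_mem X (take k s) <= count_mem Y (take k s)) ->
  forall j, j < size s -> nth N s j = X -> exists2 i, i < j & nth N s i = Y.
Proof.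
move=> nXY H j hj e.
have := H j.+1; rewrite (take_nth N hj) -!cats1 !count_cat /= e eqxx (negbTE nXY).
rewrite (_ : false + 0 = 0) // addn1 addn0 => /(leq_ltn_trans (leq0n _)).
rewrite -has_count => /(has_nthP N)[i hi /eqP ei].
rewrite size_take_min in hi.
exists i; first by lia.
by rewrite -ei nth_take //; lia.
Qed.

Lemma find_unique (T : Type) (x0 : T) (p : pred T) s j :
  count p s <= 1 -> j < size s -> p (nth x0 s j) -> find p s = j.
Proof.
move=> c1 hj pj.
have hf : find p s <= j.
  case: (leqP (find p s) j) => // h; by rewrite (before_find x0 h) in pj.
case: (ltnP (find p s) j) => h; last by apply/eqP; rewrite eqn_leq hf h.
exfalso.
have hs : has p s by apply/(has_nthP x0); exists j.
move: c1; rewrite -(cat_take_drop j s) count_cat.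
have : 0 < count p (take j s).
  by rewrite -has_count has_take // .
have : 0 < count p (drop j s).
  rewrite -has_count; apply/(has_nthP x0); exists 0; rewrite ?size_drop ?nth_drop ?addn0 //; lia.
lia.
Qed.


Definition inA (w : seq step) k := (k == 1) || ((k == 2) && (S \in w)) || ((2 < k) && (nth N w (k-3) == E)).
Definition inL (w : seq step) k := (k == 1) || ((k == 2) && (S \notin w)) || ((2 < k) && (nth N w (k-3) == N)).
Definition Aseq (w : seq step) := [seq k <- iota 1 (size w + 2) | inA w k].
Definition Lseq (w : seq step) := [seq k <- iota 1 (size w + 2) | inL w k].
Definition isH (x : step) := (x == S) || (x == W).
Definition hv (w : seq step) := find isH w + 3.

Lemma count_nth_shift (w : seq step) (P : pred step) (Q : pred nat) :
  {in iota 3 (size w), forall k, Q k = P (nth N w (k-3))} ->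
  count Q (iota 3 (size w)) = count P w.
Proof.
move=> H; rewrite (eq_in_count H).
rewrite -[in RHS](mkseq_nth N w) /mkseq count_map (iotaDl 3 0) count_map.
apply: eq_count => i /=; by rewrite addKn.
Qed.

Lemma iota_split m : iota 1 (m + 2) = 1 :: 2 :: iota 3 m.
Proof. by rewrite addnC. Qed.

Lemma size_Aseq w : size (Aseq w) = 1 + (S \in w) + count_mem E w.
Proof.
rewrite /Aseq size_filter iota_split /= /inA /=.
rewrite (count_nth_shift (P := pred1 E)); first by case: (S \in w).
by move=> k; rewrite mem_iota; case: k => [|[|[|k]]] //= _; rewrite subn0.
Qed.

Lemma size_Lseq w : size (Lseq w) = 1 + (S \notin w) + count_mem N w.
Proof.
rewrite /Lseq size_filter iota_split /= /inL /=.
rewrite (count_nth_shift (P := pred1 N)); first by case: (S \in w).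
by move=> k; rewrite mem_iota; case: k => [|[|[|k]]] //= _; rewrite subn0.
Qed.

Lemma mem_Aseq w k : (k \in Aseq w) = (0 < k <= size w + 2) && inA w k.
Proof. by rewrite mem_filter mem_iota andbC; congr andb; lia. Qed.
Lemma mem_Lseq w k : (k \in Lseq w) = (0 < k <= size w + 2) && inL w k.
Proof. by rewrite mem_filter mem_iota andbC; congr andb; lia. Qed.

Lemma Aseq_sorted w : sorted ltn (Aseq w).
Proof. apply: sorted_filter; [exact: ltn_trans | exact: iota_ltn_sorted]. Qed.
Lemma Lseq_sorted w : sorted ltn (Lseq w).
Proof. apply: sorted_filter; [exact: ltn_trans | exact: iota_ltn_sorted]. Qed.
Lemma Aseq_uniq w : uniq (Aseq w).
Proof. apply: filter_uniq; exact: iota_uniq. Qed.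
Lemma Lseq_uniq w : uniq (Lseq w).
Proof. apply: filter_uniq; exact: iota_uniq. Qed.

Lemma Aseq0 w : nth 0 (Aseq w) 0 = 1.
Proof. by rewrite /Aseq iota_split /= /inA. Qed.
Lemma Lseq0 w : nth 0 (Lseq w) 0 = 1.
Proof. by rewrite /Lseq iota_split /= /inL. Qed.

Lemma AL1 w k : inA w k -> inL w k -> k = 1.
Proof.
rewrite /inA /inL; case: k => [|[|[|k]]] //=; first by case: (S \in w).
by move=> /eqP ->; rewrite stepE.
Qed.

Lemma inA1 w : inA w 1. Proof. by []. Qed.
Lemma inL1 w : inL w 1. Proof. by []. Qed.
Lemma inA2 w : inA w 2 = (S \in w). Proof. by rewrite /inA /= orbF. Qed.
Lemma inL2 w : inL w 2 = (S \notin w). Proof. by rewrite /inL /= orbF. Qed.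
Lemma inA3 w k : 2 < k -> inA w k = (nth N w (k-3) == E).
Proof. by case: k => [|[|[|k]]] //= _. Qed.
Lemma inL3 w k : 2 < k -> inL w k = (nth N w (k-3) == N).
Proof. by case: k => [|[|[|k]]] //= _. Qed.


Lemma nth_psi n (T : filling n) i : i < 2*n+2 -> nth N (psi T) i = psi_step T i.+1.
Proof. move=> hi; exact: (nth_mktuple _ N (Ordinal hi)). Qed.

Lemma size_psi n (T : filling n) : size (psi T) = 2*n+2.
Proof. exact: size_tuple. Qed.

Section PsiFacts.
Variable n : nat.
Variable T : filling n.
Hypothesis HT : T \in SYT n.

Lemma mem_armseq k : (k \in armseq T) -> 0 < k <= 2*n+4.
Proof. move=> /mapP[c _ ->]; have := T_pos HT (armb c); have := T_bnd T (armb c) ; rewrite /aT; lia. Qed.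
Lemma mem_legseq k : (k \in legseq T) -> 0 < k <= 2*n+4.
Proof. move=> /mapP[c _ ->]; have := T_pos HT (legb c); have := T_bnd T (legb c) ; rewrite /lT; lia. Qed.

Lemma a_in c : c < n+2 -> aT T c \in armseq T.
Proof. by move=> hc; apply/mapP; exists c; rewrite ?mem_iota. Qed.
Lemma l_in c : c < n+2 -> lT T c \in legseq T.
Proof. by move=> hc; apply/mapP; exists c; rewrite ?mem_iota. Qed.

Lemma psi_stepE k : 3 <= k <= 2*n+4 -> psi_step T (k-2) =
  if k \in armseq T then E else if k \in legseq T then N
  else if 2 \in armseq T then S else W.
Proof.
move=> hk; rewrite /psi_step (_ : k - 2 + 2 = k); last lia.
rewrite !arm_entry leg_entry heart_entry.
case: ifP => // hA; case: ifP => // hL.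
have hk' : 0 < k < 2*n+5 by lia.
case: (T_cover HT hk') => [|| <-]; [by rewrite ?hA ?hL|by rewrite ?hA ?hL|].
by rewrite eqxx.
Qed.

Lemma nth_psiE k : 3 <= k <= 2*n+4 -> nth N (psi T) (k-3) =
  if k \in armseq T then E else if k \in legseq T then N
  else if 2 \in armseq T then S else W.
Proof. move=> hk; rewrite nth_psi; last lia. rewrite -psi_stepE //; congr psi_step; lia. Qed.

Lemma one_arm : 1 \in armseq T.
Proof. by rewrite -(T_a0 HT) a_in //; lia. Qed.
Lemma one_leg : 1 \in legseq T.
Proof. by rewrite -(T_a0 HT) /aT -legb0 l_in //; lia. Qed.

Lemma two_al : (2 \in legseq T) = (2 \notin armseq T).
Proof.
have h2 : 0 < 2 < 2*n+5 by lia.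
case: (T_cover HT h2) => h.
- by rewrite h /=; apply/negP => /(T_excl HT h).
- by rewrite h; case: (boolP (2 \in armseq T)) => // /(T_excl HT)/(_ h).
- by have := T_h3 HT; lia.
Qed.

Lemma sA_psi : (S \in (psi T : seq step)) = (2 \in armseq T).
Proof.
apply/idP/idP.
  move=> /(nthP N)[i]; rewrite size_psi => hi.
  rewrite (_ : i = (i+3) - 3); last lia.
  rewrite nth_psiE; last lia.
  by case: ifP => _; [|case: ifP => _; [|case: ifP]].
move=> h2; apply/(nthP N); exists (hT T - 3).
  by rewrite size_psi; have := T_h3 HT; have := T_hbnd HT; lia.
rewrite nth_psiE; last by have := T_h3 HT; have := T_hbnd HT; lia.
by rewrite (negbTE (T_hA HT)) (negbTE (T_hL HT)) h2.
Qed.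

Lemma inA_psi k : 0 < k <= 2*n+4 -> inA (psi T) k = (k \in armseq T).
Proof.
move=> hk; case: (ltnP 2 k) => h3.
  rewrite inA3 // nth_psiE; last lia.
  case: ifP => _; first by rewrite eqxx.
  by case: ifP => _; [|case: ifP => _]; rewrite stepE.
have [->|->] : k = 1 \/ k = 2 by lia.
  by rewrite inA1 one_arm.
by rewrite inA2 sA_psi.
Qed.

Lemma inL_psi k : 0 < k <= 2*n+4 -> inL (psi T) k = (k \in legseq T).
Proof.
move=> hk; case: (ltnP 2 k) => h3.
  rewrite inL3 // nth_psiE; last lia.
  case: ifP => hA.
    rewrite stepE; apply/esym/negP => /(T_excl HT hA); lia.
  case: ifP => _; first by rewrite eqxx.
  by case: ifP => _; rewrite stepE.
have [->|->] : k = 1 \/ k = 2 by lia.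
  by rewrite inL1 one_leg.
by rewrite inL2 sA_psi two_al.
Qed.

Lemma Aseq_psi : Aseq (psi T) = armseq T.
Proof.
apply: (irr_sorted_eq ltn_trans ltnn); [exact: Aseq_sorted | exact: T_armsorted HT|].
move=> k; rewrite mem_Aseq size_psi.
case: (boolP (0 < k <= 2 * n + 2 + 2)) => hk /=.
  by rewrite inA_psi //; lia.
by apply/esym/negP => /mem_armseq; lia.
Qed.

Lemma Lseq_psi : Lseq (psi T) = legseq T.
Proof.
apply: (irr_sorted_eq ltn_trans ltnn); [exact: Lseq_sorted | exact: T_legsorted HT|].
move=> k; rewrite mem_Lseq size_psi.
case: (boolP (0 < k <= 2 * n + 2 + 2)) => hk /=.
  by rewrite inL_psi //; lia.
by apply/esym/negP => /mem_legseq; lia.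
Qed.

End PsiFacts.


Lemma count_isH (s : seq step) : count isH s = count_mem S s + count_mem W s.
Proof. elim: s => [|x s IH] //=; rewrite IH /isH; case: x; rewrite !stepE /=; lia. Qed.

Lemma mem_count (x : step) s : (x \in s) = (0 < count_mem x s).
Proof. by rewrite -has_count has_pred1. Qed.

Section PsiPaths.
Variable n : nat.
Variable T : filling n.
Hypothesis HT : T \in SYT n.

Lemma cE : count_mem E (psi T) + (2 \in armseq T) = n+1.
Proof.
have := size_Aseq (psi T); rewrite Aseq_psi // sA_psi // size_map size_iota; lia.
Qed.
Lemma cN : count_mem N (psi T) + (2 \notin armseq T) = n+1.
Proof.
have := size_Lseq (psi T); rewrite Lseq_psi // sA_psi // size_map size_iota; lia.
Qed.
Lemma cSW : count_mem S (psi T) + count_mem W (psi T) = 1.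
Proof.
have := count4 (psi T); rewrite size_psi; have := cE; have := cN.
case: (2 \in armseq T) => /=; lia.
Qed.
Lemma cS : count_mem S (psi T) = (2 \in armseq T).
Proof.
have := cSW; have := mem_count S (psi T); rewrite sA_psi //.
case: (2 \in armseq T) => /=; lia.
Qed.

Lemma nth_psi_S k : 3 <= k <= 2*n+4 -> nth N (psi T) (k-3) = S -> hT T = k /\ 2 \in armseq T.
Proof.
move=> hk; rewrite nth_psiE //.
case: ifP => hA; first by move/eqP; rewrite stepE.
case: ifP => hL; first by move/eqP; rewrite stepE.
have hk' : 0 < k < 2*n+5 by lia.
case: (T_cover HT hk'); rewrite ?hA ?hL // => ->.
by case: ifP => // _ /eqP; rewrite stepE.
Qed.

Lemma nth_psi_W k : 3 <= k <= 2*n+4 -> nth N (psi T) (k-3) = W -> hT T = k /\ 2 \notin armseq T.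
Proof.
move=> hk; rewrite nth_psiE //.
case: ifP => hA; first by move/eqP; rewrite stepE.
case: ifP => hL; first by move/eqP; rewrite stepE.
have hk' : 0 < k < 2*n+5 by lia.
case: (T_cover HT hk'); rewrite ?hA ?hL // => ->.
by case: ifP => // _ /eqP; rewrite stepE.
Qed.

Lemma hv_psi : hv (psi T) = hT T.
Proof.
rewrite /hv (@find_unique _ N _ _ (hT T - 3)); first by have := T_h3 HT; lia.
- by rewrite count_isH cSW.
- by rewrite size_psi; have := T_h3 HT; have := T_hbnd HT; lia.
rewrite (nth_psiE HT); last by have := T_h3 HT; have := T_hbnd HT; lia.
rewrite (negbTE (T_hA HT)) (negbTE (T_hL HT)).
by rewrite /isH; case: ifP; rewrite !stepE.
Qed.

Lemma psi_path : psi T \in Paths n.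
Proof.
case: (T_mono HT) => P1 P2 P3 P4.
have a0 := T_a0 HT.
have l0 : lT T 0 = aT T 0 by rewrite /lT legb0.
have hb := T_hbnd HT.
rewrite inE /is_path_n; apply/andP; split.
  apply/allP => k _; rewrite quadE; apply/andP; split.
  - apply: QL; first by have := cSW; lia.
    move=> j; rewrite size_psi => hj e.
    have [hh h2] := @nth_psi_W (j+3) ltac:(lia) ltac:(by rewrite addnK).
    have a1 := P1 0 1 ltac:(lia).
    have a2 : aT T 1 != 2.
      apply/eqP => e2; move: h2; rewrite -two_al // -e2.
      move=> /(T_excl HT (a_in T (c:=1) ltac:(lia))); lia.
    exists (aT T 1 - 3); first lia.
    rewrite (nth_psiE HT (k := aT T 1)); last lia.
    by rewrite a_in //; lia.
  - apply: QL; first by have := cSW; lia.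
    move=> j; rewrite size_psi => hj e.
    have [hh h2] := @nth_psi_S (j+3) ltac:(lia) ltac:(by rewrite addnK).
    have a1 := P2 0 1 ltac:(lia).
    have a2 : lT T 1 != 2.
      apply/eqP => e2; move: h2; rewrite -e2.
      move=> /(T_excl HT)/(_ (l_in T (c:=1) ltac:(lia))); lia.
    have a3 : lT T 1 \notin armseq T.
      by apply/negP => /(T_excl HT)/(_ (l_in T (c:=1) ltac:(lia))); lia.
    exists (lT T 1 - 3); first lia.
    rewrite (nth_psiE HT (k := lT T 1)); last lia.
    by rewrite (negbTE a3) l_in //; lia.
rewrite endpointE; apply/eqP.
have := cE; have := cN; have := cSW; have := cS.
case: (2 \in armseq T) => /= h1 h2 h3 h4; congr pair; lia.
Qed.

End PsiPaths.


Definition ov0 {n} : 'I_(2*n+5) := Ordinal (n:=2*n+5) (m:=0) (ltn_addl _ (isT : 0 < 5)).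
Definition ordv {n} (k : nat) : 'I_(2*n+5) := insubd ov0 k.
Lemma val_ordv n k : k < 2*n+5 -> val (@ordv n k) = k.
Proof. by move=> h; rewrite val_insubd h. Qed.

Definition raw {n} (w : seq step) (b : box n) : nat :=
  if brow b == 0 then nth 0 (Aseq w) (bcol b)
  else if bcol b == 0 then nth 0 (Lseq w) (brow b) else hv w.

Definition phi {n} (w : seq step) : filling n := [ffun b => ordv (raw w b)].

Lemma raw_arm n w c : c < n+2 -> raw w (@armb n c) = nth 0 (Aseq w) c.
Proof. by move=> hc; rewrite /raw brow_arm bcol_arm. Qed.
Lemma raw_leg n w r : r < n+2 -> raw w (@legb n r) = nth 0 (Lseq w) r.
Proof.
move=> hr; case: r hr => [|r] hr; first by rewrite legb0 raw_arm // Aseq0 Lseq0.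
by rewrite /raw brow_leg // bcol_leg.
Qed.
Lemma raw_heart n w : raw w (@heartb n) = hv w.
Proof. by rewrite /raw brow_heart bcol_heart. Qed.

Ltac setc w := repeat match goal with H : context[count _ _] |- _ => revert H end;
  set cN := count_mem N (tval w); set cS := count_mem S (tval w);
  set cE := count_mem E (tval w); set cW := count_mem W (tval w); intros.

Section PhiFacts.
Variable n : nat.
Variable w : (2*n+2).-tuple step.
Hypothesis Hw : w \in Paths n.

Lemma sw : size w = 2*n+2. Proof. exact: size_tuple. Qed.

Lemma w_counts : [/\ count_mem E w = n + count_mem W w,
   count_mem N w = n + count_mem S w & count_mem S w + count_mem W w = 1].
Proof.
move: Hw; rewrite inE /is_path_n => /andP[_ /eqP]; rewrite endpointE => -[e1 e2].
move/eqP: e1; rewrite GRing.subr_eq -PoszD eqz_nat => /eqP e1.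
move/eqP: e2; rewrite GRing.subr_eq -PoszD eqz_nat => /eqP e2.
have := count4 w; rewrite sw => h.
set a := count_mem N w in e2 h *; set b := count_mem S w in e2 h *; set c := count_mem E w in e1 h *; set d := count_mem W w in e1 h *.
split => //; lia.
Qed.

Lemma w_quad k : (count_mem W (take k w) <= count_mem E (take k w)) &&
                 (count_mem S (take k w) <= count_mem N (take k w)).
Proof.
move: Hw; rewrite inE /is_path_n => /andP[/allP H _].
rewrite -quadE.
case: (leqP k (2*n+2)) => hk.
  by apply: H; rewrite mem_iota; lia.
rewrite take_oversize; last by rewrite sw; lia.
have := H (2*n+2); rewrite mem_iota take_oversize ?sw //; apply; lia.
Qed.

Lemma w_SN j : j < size w -> nth N w j = S -> exists2 i, i < j & nth N w i = N.
Proof. by apply: QR; [rewrite stepE | move=> k; case/andP: (w_quad k)]. Qed.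
Lemma w_WE j : j < size w -> nth N w j = W -> exists2 i, i < j & nth N w i = E.
Proof. by apply: QR; [rewrite stepE | move=> k; case/andP: (w_quad k)]. Qed.

Lemma cSw : count_mem S w = (S \in (w : seq step)).
Proof. case: w_counts => _ _; rewrite mem_count; setc w; lia. Qed.

Lemma size_A : size (Aseq w) = n+2.
Proof.
rewrite size_Aseq; have c := cSw; case: w_counts => h1 h2 h3.
move: c; case: (S \in (w : seq step)) => /= c; setc w; lia.
Qed.
Lemma size_L : size (Lseq w) = n+2.
Proof.
rewrite size_Lseq; have c := cSw; case: w_counts => h1 h2 h3.
move: c; case: (S \in (w : seq step)) => /= c; setc w; lia.
Qed.

Lemma hasH : has isH w.
Proof. by rewrite has_count count_isH; case: w_counts => _ _ ->. Qed.

Lemma hv_bnd : 3 <= hv w <= 2*n+4.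
Proof. have := hasH; rewrite has_find /hv sw; lia. Qed.

Lemma hv_isH : isH (nth N w (hv w - 3)).
Proof. rewrite /hv addnK; exact: nth_find hasH. Qed.

Lemma hv_unique j : j < size w -> isH (nth N w j) -> hv w = j + 3.
Proof.
move=> hj hH; rewrite /hv (find_unique (x0:=N) _ hj hH) //.
by rewrite count_isH; case: w_counts => _ _ ->.
Qed.

Lemma A_bnd x : x \in Aseq w -> 0 < x <= 2*n+4.
Proof. by rewrite mem_Aseq sw => /andP[h _]; lia. Qed.
Lemma L_bnd x : x \in Lseq w -> 0 < x <= 2*n+4.
Proof. by rewrite mem_Lseq sw => /andP[h _]; lia. Qed.

Lemma nthA_in c : c < n+2 -> nth 0 (Aseq w) c \in Aseq w.
Proof. by move=> hc; rewrite mem_nth // size_A. Qed.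
Lemma nthL_in c : c < n+2 -> nth 0 (Lseq w) c \in Lseq w.
Proof. by move=> hc; rewrite mem_nth // size_L. Qed.

Lemma hv_notA : hv w \notin Aseq w.
Proof.
rewrite mem_Aseq inA3; last by have := hv_bnd; lia.
have := hv_isH; rewrite /isH.
by case: (nth N w (hv w - 3)); rewrite !stepE; case: (0 < hv w <= size w + 2).
Qed.
Lemma hv_notL : hv w \notin Lseq w.
Proof.
rewrite mem_Lseq inL3; last by have := hv_bnd; lia.
have := hv_isH; rewrite /isH.
by case: (nth N w (hv w - 3)); rewrite !stepE; case: (0 < hv w <= size w + 2).
Qed.

Lemma nth1_le (s : seq nat) x : sorted ltn s -> nth 0 s 0 = 1 -> x \in s -> x != 1 -> nth 0 s 1 <= x.
Proof.
move=> so s0 xs x1.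
have hi : index x s < size s by rewrite index_mem.
have i0 : index x s != 0.
  by apply/eqP => e; move: x1; rewrite -(nth_index 0 xs) e s0.
case: (ltngtP 1 (index x s)) => h; last first.
- by rewrite h nth_index.
- lia.
apply: ltnW; rewrite -[X in _ < X](nth_index 0 xs).
by apply: (sorted_ltn_nth ltn_trans) => //; rewrite inE; lia.
Qed.

Lemma a1_hv : nth 0 (Aseq w) 1 < hv w.
Proof.
have hb := hv_bnd.
case: (boolP (S \in (w : seq step))) => hS.
  have h2 : 2 \in Aseq w by rewrite mem_Aseq inA2 hS sw andbT; lia.
  have := nth1_le (Aseq_sorted w) (Aseq0 w) h2 isT; lia.
have hW : nth N w (hv w - 3) = W.
  move: hv_isH hS; rewrite /isH.
  case e: (nth N w (hv w - 3)); rewrite ?stepE //= => _ /negP []; rewrite -e mem_nth // sw; lia.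
have [i hi ei] := w_WE (j := hv w - 3) ltac:(rewrite sw; lia) hW.
have hx : i + 3 \in Aseq w by rewrite mem_Aseq inA3 ?addnK ?ei ?eqxx ?sw ?andbT //; lia.
have := nth1_le (Aseq_sorted w) (Aseq0 w) hx ltac:(apply/eqP; lia); lia.
Qed.

Lemma l1_hv : nth 0 (Lseq w) 1 < hv w.
Proof.
have hb := hv_bnd.
case: (boolP (S \in (w : seq step))) => hS; last first.
  have h2 : 2 \in Lseq w by rewrite mem_Lseq inL2 hS sw andbT; lia.
  have := nth1_le (Lseq_sorted w) (Lseq0 w) h2 isT; lia.
have hSS : nth N w (hv w - 3) = S.
  have cW : count_mem W w = 0 by case: w_counts; rewrite cSw hS; lia.
  move: hv_isH; rewrite /isH.
  case e: (nth N w (hv w - 3)); rewrite ?stepE //= => _.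
  move/count_memPn: cW => /negP []; rewrite -e mem_nth // sw; lia.
have [i hi ei] := w_SN (j := hv w - 3) ltac:(rewrite sw; lia) hSS.
have hx : i + 3 \in Lseq w by rewrite mem_Lseq inL3 ?addnK ?ei ?eqxx ?sw ?andbT //; lia.
have := nth1_le (Lseq_sorted w) (Lseq0 w) hx ltac:(apply/eqP; lia); lia.
Qed.

End PhiFacts.


Section PhiSYT.
Variable n : nat.
Variable w : (2*n+2).-tuple step.
Hypothesis Hw : w \in Paths n.

Lemma raw_bnd (b : box n) : 0 < raw w b <= 2*n+4.
Proof.
case: (boxP b) => [c hc|r hr|].
- by rewrite raw_arm //; have := A_bnd Hw (nthA_in Hw hc).
- by rewrite raw_leg; [have := L_bnd Hw (nthL_in Hw (c:=r) ltac:(lia))|lia].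
- by rewrite raw_heart; have := hv_bnd Hw; lia.
Qed.

Lemma vphi (b : box n) : val (@phi n w b) = raw w b.
Proof. by rewrite ffunE val_ordv //; have := raw_bnd b; lia. Qed.

Lemma aphi c : c < n+2 -> aT (@phi n w) c = nth 0 (Aseq w) c.
Proof. by move=> hc; rewrite /aT vphi raw_arm. Qed.
Lemma lphi c : c < n+2 -> lT (@phi n w) c = nth 0 (Lseq w) c.
Proof. by move=> hc; rewrite /lT vphi raw_leg. Qed.
Lemma hphi : hT (@phi n w) = hv w.
Proof. by rewrite /hT vphi raw_heart. Qed.

Lemma nAL c r : c < n+2 -> 0 < r < n+2 -> nth 0 (Aseq w) c != nth 0 (Lseq w) r.
Proof.
move=> hc hr; apply/eqP => e.
have hA := nthA_in Hw hc; have hL := nthL_in Hw (c:=r) ltac:(lia).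
move: hA hL; rewrite mem_Aseq mem_Lseq e => /andP[_ a] /andP[_ l].
have := AL1 a l.
have := @sorted_ltn_nth _ _ ltn_trans 0 _ (Lseq_sorted w) 0 r.
rewrite !inE size_L // Lseq0 => h; have := h ltac:(lia) ltac:(lia) ltac:(lia); lia.
Qed.

Lemma nAH c : c < n+2 -> nth 0 (Aseq w) c != hv w.
Proof.
move=> hc; apply/eqP => e; have := nthA_in Hw hc; rewrite e.
by move: (hv_notA Hw) => /negP.
Qed.
Lemma nLH c : c < n+2 -> nth 0 (Lseq w) c != hv w.
Proof.
move=> hc; apply/eqP => e; have := nthL_in Hw hc; rewrite e.
by move: (hv_notL Hw) => /negP.
Qed.

Lemma phi_SYT : phi w \in SYT n.
Proof.
have [P1 P2 P3 P4] : [/\ (forall c c', c < c' < n+2 -> aT (@phi n w) c < aT (@phi n w) c'),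
          (forall r r', r < r' < n+2 -> lT (@phi n w) r < lT (@phi n w) r'),
          aT (@phi n w) 1 < hT (@phi n w) & lT (@phi n w) 1 < hT (@phi n w)].
  split.
  - move=> c c' hc; rewrite !aphi; try lia.
    apply: (sorted_ltn_nth ltn_trans 0 (Aseq_sorted w)); rewrite ?inE ?size_A //; lia.
  - move=> c c' hc; rewrite !lphi; try lia.
    apply: (sorted_ltn_nth ltn_trans 0 (Lseq_sorted w)); rewrite ?inE ?size_L //; lia.
  - by rewrite aphi ?hphi; [exact: a1_hv|lia].
  - by rewrite lphi ?hphi; [exact: l1_hv|lia].
have /andP[R C] := proj2 (SYT_rc (@phi n w)) (And4 P1 P2 P3 P4).
rewrite inE /is_SYT R C !andbT; apply/and3P; split.
- apply/injectiveP => b1 b2 /(congr1 val); rewrite !vphi.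
  case: (boxP b1) => [c hc|r hr|]; case: (boxP b2) => [c' hc'|r' hr'|];
    rewrite ?raw_arm ?raw_leg ?raw_heart //; try lia.
  + move/eqP; rewrite nth_uniq ?size_A ?Aseq_uniq // => /eqP -> //.
  + by move/eqP; rewrite (negbTE (nAL hc hr')).
  + by move/eqP; rewrite (negbTE (nAH hc)).
  + by move/esym/eqP; rewrite (negbTE (nAL hc' hr)).
  + have h1 : r < n+2 by lia. have h2 : r' < n+2 by lia.
    move/eqP; rewrite nth_uniq ?size_L ?Lseq_uniq // => /eqP -> //.
  + by move/eqP; rewrite (negbTE (nLH (c:=r) ltac:(lia))).
  + by move/esym/eqP; rewrite (negbTE (nAH hc')).
  + by move/esym/eqP; rewrite (negbTE (nLH (c:=r') ltac:(lia))).
- apply/forallP => -[k kb0]; apply/implyP => /= k0; apply/existsP.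
  have kb : k <= 2*n+4 by lia.
  case: (boolP (inA w k)) => hA.
    have kA : k \in Aseq w by rewrite mem_Aseq sw hA andbT; lia.
    have hi : index k (Aseq w) < n+2 by rewrite -(size_A Hw) index_mem.
    exists (armb (index k (Aseq w))); apply/eqP/val_inj => /=.
    by rewrite vphi raw_arm // nth_index.
  case: (boolP (inL w k)) => hL.
    have kL : k \in Lseq w by rewrite mem_Lseq sw hL andbT; lia.
    have hi : index k (Lseq w) < n+2 by rewrite -(size_L Hw) index_mem.
    exists (legb (index k (Lseq w))); apply/eqP/val_inj => /=.
    by rewrite vphi raw_leg // nth_index.
  have k3 : 2 < k.
    move: hA hL; case: k kb0 k0 kb => [|[|[|x]]] //= _ _ _.
    by rewrite inA2 inL2; case: (S \in (w : seq step)).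
  exists heartb; apply/eqP/val_inj => /=; rewrite vphi raw_heart.
  rewrite (hv_unique Hw (j := k - 3)); first lia.
    by rewrite sw; lia.
  move: hA hL; rewrite inA3 // inL3 // /isH.
  by case: (nth N w (k - 3)); rewrite !stepE.
- apply/forallP => b; rewrite vphi; have := raw_bnd b; lia.
Qed.

End PhiSYT.


Section PsiPhi.
Variable n : nat.
Variable w : (2*n+2).-tuple step.
Hypothesis Hw : w \in Paths n.

Lemma armseq_phi : armseq (@phi n w) = Aseq w.
Proof.
rewrite /armseq (_ : [seq aT (@phi n w) c | c <- iota 0 (n+2)] = [seq nth 0 (Aseq w) c | c <- iota 0 (n+2)]); last first.
  by apply/eq_in_map => c; rewrite mem_iota => hc; rewrite aphi //; lia.
by rewrite map_nth_iota0 ?size_A // take_oversize // size_A.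
Qed.
Lemma legseq_phi : legseq (@phi n w) = Lseq w.
Proof.
rewrite /legseq (_ : [seq lT (@phi n w) c | c <- iota 0 (n+2)] = [seq nth 0 (Lseq w) c | c <- iota 0 (n+2)]); last first.
  by apply/eq_in_map => c; rewrite mem_iota => hc; rewrite lphi //; lia.
by rewrite map_nth_iota0 ?size_L // take_oversize // size_L.
Qed.

Lemma psi_phi : psi (@phi n w) = w.
Proof.
apply: val_inj; apply: (eq_from_nth (x0 := N)); first by rewrite !size_tuple.
move=> i; rewrite size_tuple => hi.
rewrite nth_psi // /psi_step (_ : i.+1 + 2 = i + 3); last lia.
rewrite !arm_entry leg_entry heart_entry armseq_phi legseq_phi hphi //.
rewrite !mem_Aseq mem_Lseq sw inA2 inA3 ?inL3 ?addnK; try lia.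
rewrite (_ : 0 < i + 3 <= 2 * n + 2 + 2 = true); last lia.
rewrite (_ : 0 < 2 <= 2 * n + 2 + 2 = true); last lia.
have hH : (hv w == i + 3) = isH (nth N w i).
  apply/eqP/idP => [e|h]; last by rewrite (hv_unique Hw (j:=i)) ?sw.
  by have := hv_isH Hw; rewrite e addnK.
rewrite hH /isH /=.
case e: (nth N w i); rewrite !stepE //=.
- by rewrite -e mem_nth ?sw.
- case: (w_counts Hw) => _ _ h.
  have : W \in (w : seq step) by rewrite -e mem_nth ?sw.
  rewrite !mem_count; case: ifP => //; move: h; setc w; lia.
Qed.

End PsiPhi.

Lemma phi_psi n (T : filling n) : T \in SYT n -> @phi n (psi T) = T.
Proof.
move=> HT; apply/ffunP => b; apply: val_inj; rewrite ffunE.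
have Hp := psi_path HT.
rewrite val_ordv; last by have := raw_bnd Hp b; lia.
case: (boxP b) => [c hc|r hr|].
- rewrite raw_arm // Aseq_psi // /armseq (nth_map 0) ?size_iota // nth_iota //.
- rewrite raw_leg; last lia.
  rewrite Lseq_psi // /legseq (nth_map 0) ?size_iota; last lia.
  by rewrite nth_iota //; lia.
- by rewrite raw_heart hv_psi.
Qed.

Theorem theorem3p1 (n : nat) :
  [/\ (forall T, T \in SYT n -> psi T \in Paths n),
      {in SYT n &, injective (@psi n)},
      (forall w, w \in Paths n -> exists2 T, T \in SYT n & psi T = w) &
      #|Paths n| = #|SYT n| ].
Proof.
have inj : {in SYT n &, injective (@psi n)}.
  by move=> T1 T2 h1 h2 e; rewrite -(phi_psi h1) -(phi_psi h2) e.
have sur : forall w, w \in Paths n -> exists2 T, T \in SYT n & psi T = w.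
  by move=> w hw; exists (@phi n w); [exact: phi_SYT | exact: psi_phi].
split => //; first by move=> T; exact: psi_path.
rewrite -(card_in_imset inj); apply: eq_card => w.
apply/idP/imsetP => [/sur [T hT <-]|[T hT ->]]; first by exists T.
exact: psi_path.
Qed.
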